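(* Let $\textsc{mix}$ be a nice mixture with parameter space $\mathcal{W}\subset\mathbb{R}^m$ and constant $a>0$ (as in the context). Let $b>1$ and set the step size $\alpha = 2(1-b^{-1})/a$. Then for every $n\ge 1$, every sequence $x^n=x_1\dots x_n$ over $\mathcal{X}$, every sequence $\mathbf{P}^n=\mathbf{P}_1,\dots,\mathbf{P}_n$ of probability matrices over $\mathcal{P}_+$ and every initial weight vector $\mathbf{w}_1\in\mathcal{W}$, $$\ell(x^n,\textsc{mix-ogd}(\mathbf{w}_1,\alpha,x^n,\mathbf{P}^n)) \le b\cdot \ell^*(x^n,\mathbf{P}^n,\textsc{mix}) + \frac{a}{4}\,\frac{b^2}{b-1}\,\lvert \mathbf{w}_1-\mathbf{w}^*\rvert^2,$$ where $\mathbf{w}^*\in\mathcal{W}$ is a minimizer of $\mathbf{w}\mapsto \ell(x^n,\mathbf{P}^n,\mathbf{w},\textsc{mix})$ over $\mathcal{W}$.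
   Context: Let $\mathcal{X}=\{1,\dots,N\}$ with $1<N<\infty$, and let $\mathcal{P}_+$ be the set of probability distributions on $\mathcal{X}$ assigning positive probability to every letter. Fix $m>1$. A probability matrix over $\mathcal{P}_+$ is $\mathbf{P}=(\mathbf{p}(1)\ \cdots\ \mathbf{p}(N))$ where $p_1,\dots,p_m\in\mathcal{P}_+$ and $\mathbf{p}(x)=(p_1(x),\dots,p_m(x))^{\mathsf T}$. For $p\in\mathcal{P}_+$ and $x\in\mathcal{X}$, $\ell(x,p):=-\log_2 p(x)$. A mixture $\textsc{mix}$ with parameter space $\mathcal{W}\subseteq\mathbb{R}^m$ maps $(\mathbf{w},\mathbf{P})$ with $\mathbf{w}\in\mathcal{W}$ to a distribution $\textsc{mix}(\mathbf{w},\mathbf{P})\in\mathcal{P}_+$. It is called nice if: (1) $\mathcal{W}$ is a non-empty, compact, convex subset of $\mathbb{R}^m$; (2) $\mathbf{w}\mapsto\ell(x,\textsc{mix}(\mathbf{w},\mathbf{P}))$ is convex on $\mathcal{W}$ for all $\mathbf{P}$ over $\mathcal{P}_+$ and all $x\in\mathcal{X}$; (3) it is differentiable in $\mathbf{w}$ for all such $\mathbf{P},x$; (4) there is a constant $a>0$ with $\lvert\nabla_{\mathbf{w}}\ell(x,\textsc{mix}(\mathbf{w},\mathbf{P}))\rvert^2\le a\,\ell(x,\textsc{mix}(\mathbf{w},\mathbf{P}))$ for all $\mathbf{w}\in\mathcal{W}$, all $\mathbf{P}$ over $\mathcal{P}_+$ and all $x\in\mathcal{X}$ ($\lvert\cdot\rvert$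 is the Euclidean norm). Algorithm $\textsc{mix-ogd}(\mathbf{w}_1,\alpha,x^n,\mathbf{P}^n)$: given $\mathbf{w}_1\in\mathcal{W}$, for $k=1,\dots,n$ it codes $x_k$ with $\ell(x_k,\textsc{mix}(\mathbf{w}_k,\mathbf{P}_k))$ bits and sets $\mathbf{w}_{k+1}=\mathrm{proj}\big(\mathbf{w}_k-\alpha\nabla_{\mathbf{w}}\ell(x_k,\textsc{mix}(\mathbf{w},\mathbf{P}_k))|_{\mathbf{w}=\mathbf{w}_k};\mathcal{W}\big)$, where $\mathrm{proj}(\mathbf{v};\mathcal{W})=\arg\min_{\mathbf{w}\in\mathcal{W}}\lvert\mathbf{v}-\mathbf{w}\rvert^2$. Its total code length is $\ell(x^n,\textsc{mix-ogd}(\mathbf{w}_1,\alpha,x^n,\mathbf{P}^n)):=\sum_{k=1}^n\ell(x_k,\textsc{mix}(\mathbf{w}_k,\mathbf{P}_k))$. Also $\ell(x^n,\mathbf{P}^n,\mathbf{w},\textsc{mix}):=\sum_{k=1}^n\ell(x_k,\textsc{mix}(\mathbf{w},\mathbf{P}_k))$ and $\ell^*(x^n,\mathbf{P}^n,\textsc{mix}):=\min_{\mathbf{w}\in\mathcal{W}}\ell(x^n,\mathbf{P}^n,\mathbf{w},\textsc{mix})$. *)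

(* Defs.v *)
From HB Require Import structures.
From mathcomp Require Import all_boot all_order all_algebra.
From mathcomp Require Import all_classical all_reals all_analysis.
Set Implicit Arguments. Unset Strict Implicit. Unset Printing Implicit Defensive.
Import Order.TTheory GRing.Theory Num.Theory.
Import numFieldNormedType.Exports.
Local Open Scope classical_set_scope.
Local Open Scope ring_scope.

Section Defs.
Variable R : realType.

Definition sqnorm (m : nat) (v : 'rV[R]_m) : R := \sum_(i < m) (v 0 i) ^+ 2.

(* p in P_+ : a probability distribution on X = 'I_N with all entries positive *)
Definition pos_dist (N : nat) (p : 'rV[R]_N) : Prop :=
  (forall x, 0 < p 0 x) /\ \sum_(x < N) p 0 x = 1.

Definition prob_matrix (m N : nat) (P : 'M[R]_(m, N)) : Prop :=
  forall i, pos_dist (row i P).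

Definition ell (N : nat) (x : 'I_N) (p : 'rV[R]_N) : R := - (ln (p 0 x) / ln 2).

Definition grad (m : nat) (f : 'rV[R]_m -> R) (w : 'rV[R]_m) : 'rV[R]_m :=
  \row_(i < m) ('D_(delta_mx 0 i) f w).

Definition convex_set (m : nat) (W : set 'rV[R]_m) : Prop :=
  forall u v t, W u -> W v -> 0 <= t <= 1 -> W (t *: u + (1 - t) *: v).

Definition convex_fun_on (m : nat) (W : set 'rV[R]_m) (f : 'rV[R]_m -> R) : Prop :=
  forall u v t, W u -> W v -> 0 <= t <= 1 ->
    f (t *: u + (1 - t) *: v) <= t * f u + (1 - t) * f v.

(* The mixture is a
   function mix : R^m -> (probability matrices) -> distributions; only its
   values on W matter except that differentiability is taken in R^m at the
   points of W. *)
Definition nice_mixture (m N : nat) (W : set 'rV[R]_m)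
    (mix : 'rV[R]_m -> 'M[R]_(m, N) -> 'rV[R]_N) (a : R) : Prop :=
  [/\
      (forall w P, W w -> prob_matrix P -> pos_dist (mix w P)),
      W !=set0 /\ compact W /\ convex_set W,
      (forall P x, prob_matrix P -> convex_fun_on W (fun w => ell x (mix w P))),
      (forall P x w, prob_matrix P -> W w -> differentiable (fun w => ell x (mix w P)) w)
    & 0 < a /\
      (forall P x w, prob_matrix P -> W w ->
        sqnorm (grad (fun w => ell x (mix w P)) w) <= a * ell x (mix w P))].

(* Euclidean projection onto W: the argmin of |v - w|^2 over w in W
   (chosen by xget; unique for nonempty closed convex W) *)
Definition proj (m : nat) (W : set 'rV[R]_m) (v : 'rV[R]_m) : 'rV[R]_m :=
  xget 0 [set u | W u /\ forall u', W u' -> sqnorm (v - u) <= sqnorm (v - u')].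

(* Weights of MIX-OGD: ogd_w k = w_{k+1}; data x_k = x k, P_k = P k (k >= 1). *)
Fixpoint ogd_w (m N : nat) (W : set 'rV[R]_m)
    (mix : 'rV[R]_m -> 'M[R]_(m, N) -> 'rV[R]_N)
    (w1 : 'rV[R]_m) (alpha : R) (x : nat -> 'I_N) (P : nat -> 'M[R]_(m, N))
    (k : nat) : 'rV[R]_m :=
  match k with
  | 0 => w1
  | k'.+1 =>
      let wk := ogd_w W mix w1 alpha x P k' in
      proj W (wk - alpha *: grad (fun w => ell (x k) (mix w (P k))) wk)
  end.

Definition ogd_codelength (m N : nat) (W : set 'rV[R]_m)
    (mix : 'rV[R]_m -> 'M[R]_(m, N) -> 'rV[R]_N)
    (w1 : 'rV[R]_m) (alpha : R) (n : nat) (x : nat -> 'I_N) (P : nat -> 'M[R]_(m, N)) : R :=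
  \sum_(1 <= k < n.+1) ell (x k) (mix (ogd_w W mix w1 alpha x P k.-1) (P k)).

Definition fixed_codelength (m N : nat)
    (mix : 'rV[R]_m -> 'M[R]_(m, N) -> 'rV[R]_N)
    (n : nat) (x : nat -> 'I_N) (P : nat -> 'M[R]_(m, N)) (w : 'rV[R]_m) : R :=
  \sum_(1 <= k < n.+1) ell (x k) (mix w (P k)).

End Defs.

(* Main.v *)
Require Import Defs.
From HB Require Import structures.
From mathcomp Require Import all_boot all_order all_algebra.
From mathcomp Require Import all_classical all_reals all_analysis.
From mathcomp Require Import ring lra.
Import Order.TTheory GRing.Theory Num.Theory.
Import numFieldNormedType.Exports.
Local Open Scope classical_set_scope.
Local Open Scope ring_scope.

Section H.
Variable R : realType.
Variable m : nat.
Implicit Types u v w x y : 'rV[R]_m.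

Definition dotv u v : R := \sum_(i < m) u 0 i * v 0 i.

Lemma sqnorm_expand x y t :
  sqnorm (x - t *: y) = sqnorm x - 2 * t * dotv x y + t ^+ 2 * sqnorm y.
Proof.
rewrite /sqnorm /dotv mulr_sumr [t ^+ 2 * _]mulr_sumr -sumrB -big_split /=.
by apply: eq_bigr => i _; rewrite !mxE; ring.
Qed.

Lemma sqnorm_ge0 x : 0 <= sqnorm x.
Proof. by apply: sumr_ge0 => i _; rewrite sqr_ge0. Qed.

Lemma sqnormN x : sqnorm (- x) = sqnorm x.
Proof. by apply: eq_bigr => i _; rewrite !mxE sqrrN. Qed.

Lemma dotvC x y : dotv x y = dotv y x.
Proof. by apply: eq_bigr => i _; rewrite mulrC. Qed.

Lemma dotvN x y : dotv x (- y) = - dotv x y.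
Proof. by rewrite /dotv -sumrN; apply: eq_bigr => i _; rewrite !mxE mulrN. Qed.

Lemma sqnorm_cont v : continuous (fun u : 'rV[R]_m => sqnorm (v - u)).
Proof.
rewrite /sqnorm.
apply: (@continuous_big _ _ +%R 0 xpredT) => //.
  exact: add_continuous.
move=> i _ u0.
have -> : (fun x : 'rV[R]_m => (v - x) 0 i ^+ 2) =
   ((cst (v 0 i) - (fun x : 'rV[R]_m => x 0 i)) \* (cst (v 0 i) - (fun x : 'rV[R]_m => x 0 i))).
  by apply: funext => x /=; rewrite !mxE expr2.
have hc : (cst (v 0 i) - (fun x : 'rV[R]_m => x 0 i)) @ u0 --> v 0 i - u0 0 i.
  apply: (@cvgB _ _ _ (nbhs u0)); first exact: cvg_cst.
  exact: coord_continuous.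
exact: (@cvgM _ _ (nbhs u0) _ _ _ _ _ hc hc).
Qed.

Lemma proj_spec (W : set 'rV[R]_m) v :
  W !=set0 -> compact W ->
  W (Defs.proj W v) /\ forall u', W u' -> sqnorm (v - Defs.proj W v) <= sqnorm (v - u').
Proof.
move=> W0 cW.
have cf : {within W, continuous (fun u : 'rV[R]_m => sqnorm (v - u))}.
  by apply: continuous_subspaceT; exact: sqnorm_cont.
have [c cW' cmin] := compact_EVT_min W0 cW cf.
apply: (@xgetPex _ 0 [set u | W u /\ forall u', W u' -> sqnorm (v - u) <= sqnorm (v - u')]).
exists c; split; first by rewrite inE in cW'.
by move=> u' Wu'; apply: cmin; rewrite inE.
Qed.


Lemma proj_le (W : set 'rV[R]_m) v w :
  W !=set0 -> compact W -> Defs.convex_set W -> W w ->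
  sqnorm (Defs.proj W v - w) <= sqnorm (v - w).
Proof.
move=> W0 cW cvW Ww.
have [Wu umin] := @proj_spec W v W0 cW.
set u := Defs.proj W v in Wu umin *.
have key : forall t, 0 < t <= 1 -> 2 * dotv (v - u) (w - u) <= t * sqnorm (w - u).
  move=> t /andP[t0 t1].
  have Wz : W (t *: w + (1 - t) *: u) by apply: cvW => //; rewrite (ltW t0) t1.
  have := umin _ Wz.
  rewrite (_ : v - (t *: w + (1 - t) *: u) = (v - u) - t *: (w - u)); last first.
    by apply/matrixP => i j; rewrite !mxE; ring.
  rewrite sqnorm_expand => h.
  nra.
have d_le0 : dotv (v - u) (w - u) <= 0.
  set c := dotv _ _; set s := sqnorm (w - u).
  have s0 : 0 <= s by exact: sqnorm_ge0.
  case: (leP c 0) => // c0; exfalso.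
  have cs0 : 0 < c + s by lra.
  have := key (c / (c + s)).
  rewrite divr_gt0 //= ler_pdivrMr // mul1r.
  have -> : (c <= c + s) = true by apply/idP; lra.
  move=> /(_ isT); rewrite mulrAC ler_pdivlMr // => h.
  rewrite -/c -/s in h; have := mulr_ge0 (ltW c0) s0; nra.
have := sqnorm_expand (v - u) (w - u) 1.
rewrite scale1r (_ : v - u - (w - u) = v - w); last by apply/matrixP => i j; rewrite !mxE; ring.
move=> ->.
rewrite (_ : sqnorm (u - w) = sqnorm (w - u)); last by rewrite -sqnormN opprB.
rewrite ?expr1n ?mulr1 ?mul1r; have := sqnorm_ge0 (v - u); lra.
Qed.

Lemma conv_grad (W : set 'rV[R]_m) (f : 'rV[R]_m -> R) u v :
  Defs.convex_fun_on W f -> W u -> W v -> differentiable f u ->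
  dotv (grad f u) (v - u) <= f v - f u.
Proof.
move=> cf Wu Wv df.
have -> : dotv (grad f u) (v - u) = 'D_(v - u) f u.
  rewrite deriveE // [in RHS](row_sum_delta (v - u)) linear_sum /dotv.
  apply: eq_bigr => i _; rewrite linearZ /= mxE -deriveE // mulrC.
  done.
have hd : derivable f u (v - u) by exact: diff_derivable.
rewrite /derive cvg_at_rightE //.
apply: limr_le.
  by apply: cvgP; apply: cvg_dnbhs_at_right; exact: hd.
near=> h.
have h0 : 0 < h by near: h; exact: nbhs_right_gt.
have h1 : h < 1 by near: h; exact: nbhs_right_lt.
have : f (h *: v + (1 - h) *: u) <= h * f v + (1 - h) * f u.
  by apply: cf => //; rewrite (ltW h0) (ltW h1).
rewrite (_ : h *: v + (1 - h) *: u = (h *: (v - u)) + u); last first.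
  by apply/matrixP => i j; rewrite !mxE; ring.
move=> hc /=.
change (h^-1 * (f (h *: (v - u) + u) - f u) <= f v - f u).
rewrite mulrC ler_pdivrMr //; nra.
Unshelve. all: by end_near.
Qed.


Lemma step (N : nat) (W : set 'rV[R]_m) (mix : 'rV[R]_m -> 'M[R]_(m, N) -> 'rV[R]_N)
  (a b : R) (x : 'I_N) (P : 'M[R]_(m, N)) w ws :
  nice_mixture W mix a -> 1 < b -> prob_matrix P -> W w -> W ws ->
  ell x (mix w P) <= b * ell x (mix ws P) +
    b / (2 * (2 * (1 - b^-1) / a)) *
    (sqnorm (w - ws) - sqnorm (Defs.proj W (w - (2 * (1 - b^-1) / a) *:
          grad (fun w => ell x (mix w P)) w) - ws)).
Proof.
move=> [_ [W0 [cW cvW]] hconv hdiff [a0 hbound]] b1 HP Ww Wws.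
set f := fun w => ell x (mix w P).
set al := 2 * (1 - b^-1) / a.
set g := grad f w.
have b0 : 0 < b by lra.
have al0 : 0 < al.
  rewrite /al divr_gt0 // mulr_gt0 // subr_gt0 invf_lt1 //.
have h1 : dotv g (ws - w) <= f ws - f w.
  exact: (@conv_grad W f w ws (hconv P x HP) Ww Wws (hdiff P x w HP Ww)).
have h2 := @proj_le W (w - al *: g) ws W0 cW cvW Wws.
rewrite (_ : w - al *: g - ws = (w - ws) - al *: g) in h2; last first.
  by apply/matrixP => i j; rewrite !mxE; ring.
rewrite sqnorm_expand in h2.
have h3 : sqnorm g <= a * f w by exact: hbound.
have ed : dotv (w - ws) g = - dotv g (ws - w).
  by rewrite dotvC -dotvN opprB.
rewrite ed in h2.
set F := f w in h1 h3 *; set Fs := f ws in h1 *.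
set S := sqnorm (w - ws) in h2 *.
set S' := sqnorm (Defs.proj W (w - al *: g) - ws) in h2 *.
set d := dotv g (ws - w) in h1 h2.
set G := sqnorm g in h2 h3.
have h3' : al ^+ 2 * G <= al ^+ 2 * (a * F) by rewrite ler_wpM2l // sqr_ge0.
have h1' : al * (F - Fs) <= al * (- d) by rewrite ler_wpM2l //; [exact: ltW | lra].
have eal : al ^+ 2 * (a * F) = al * (2 * (1 - b^-1)) * F.
  rewrite /al; field; lra.
rewrite eal in h3'.
have H : 2 * al * (b^-1 * F - Fs) <= S - S' by nra.
change (F <= b * Fs + b / (2 * al) * (S - S')).
have -> : F = b * Fs + b / (2 * al) * (2 * al * (b^-1 * F - Fs)).
  by field; apply/andP; split; lra.
rewrite lerD2l ler_wpM2l // divr_ge0 //; lra.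
Qed.

End H.

Theorem proposition1 (R : realType) (N m : nat) (W : set 'rV[R]_m)
    (mix : 'rV[R]_m -> 'M[R]_(m, N) -> 'rV[R]_N) (a b : R) :
  (1 < N)%N -> (1 < m)%N ->
  nice_mixture W mix a ->
  1 < b ->
  forall (n : nat) (x : nat -> 'I_N) (P : nat -> 'M[R]_(m, N)) (w1 wstar : 'rV[R]_m),
  (1 <= n)%N ->
  (forall k, (1 <= k <= n)%N -> prob_matrix (P k)) ->
  W w1 ->
  W wstar ->
  (forall w, W w -> fixed_codelength mix n x P wstar <= fixed_codelength mix n x P w) ->
  ogd_codelength W mix w1 (2 * (1 - b^-1) / a) n x P
    <= b * fixed_codelength mix n x P wstar
       + a / 4 * (b ^+ 2 / (b - 1)) * sqnorm (w1 - wstar).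
Proof.
move=> _ _ nice b1 n x P w1 ws _ HP Ww1 Wws _.
have nice' := nice.
move: nice' => [_ [W0 [cW _]] _ _ [a0 _]].
set al := 2 * (1 - b^-1) / a.
set v := fun j => ogd_w W mix w1 al x P j.
set K := b / (2 * al).
have Wv : forall j, W (v j).
  elim=> [|j IH] //=.
  exact: (@proj_spec R m W _ W0 cW).1.
have stepk : forall k, (1 <= k < n.+1)%N ->
    ell (x k) (mix (v k.-1) (P k)) <=
    b * ell (x k) (mix ws (P k)) + K * (sqnorm (v k.-1 - ws) - sqnorm (v k - ws)).
  case=> [//|k] /andP[_ kn] /=.
  by rewrite /v /=; apply: step => //; exact: HP.
rewrite /ogd_codelength /fixed_codelength.
apply: le_trans.
  exact: (ler_sum_nat stepk).
rewrite big_split /= -mulr_sumr -mulr_sumr.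
have tel : \sum_(1 <= i < n.+1) (sqnorm (v i.-1 - ws) - sqnorm (v i - ws)) =
    sqnorm (v 0%N - ws) - sqnorm (v n - ws).
  rewrite (@telescope_sumr_eq _ 1 n.+1 (fun k => - sqnorm (v k.-1 - ws))) //=.
    by rewrite opprK addrC.
  by move=> k _ /=; rewrite opprK addrC.
rewrite tel.
rewrite /= lerD2l.
have b0 : 0 < b by lra.
have al0 : 0 < al.
  rewrite /al divr_gt0 // mulr_gt0 // subr_gt0 invf_lt1 //.
have -> : a / 4 * (b ^+ 2 / (b - 1)) = K.
  rewrite /K /al; field; apply/and3P; split; apply/eqP; lra.
rewrite ler_wpM2l ?divr_ge0 //; try lra.
have := @sqnorm_ge0 R m (v n - ws).
rewrite /v /=; lra.
Qed.
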